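(* Let $n\ge 3$ and let $A=(a_{ij})_{i,j=1}^n\in\mathbb{R}^{n\times n}$ be symmetric with $\max_{i,j}|a_{ij}|=1$. Suppose $A=LTL^T$, where $L=(l_{ij})_{i,j=1}^n$ is unit lower triangular with first column equal to $e_1$ (the first column of the identity matrix) and $|l_{ij}|\le 1$ for all $i,j$, and $T=(t_{ij})_{i,j=1}^n$ is symmetric tridiagonal. Then: (a) $|t_{11}|\le 1$, $|t_{21}|\le 1$, $|t_{22}|\le 1$, and $|l_{i2}\,t_{21}|\le 1$ for $3\le i\le n$; (b) $\left|l_{i,j-1}\,t_{j-1,j}+l_{ij}\,t_{jj}+l_{i,j+1}\,t_{j+1,j}\right|\le 2^{j-2}$ for all $2\le j<i\le n$; (c) $\left|l_{n,n-1}\,t_{n-1,n}+t_{nn}\right|\le 2^{n-2}$; (d) $|t_{i,i-1}|\le 2^{i-2}$ and $|t_{ii}|\le 2^{i-1}$ for $3\le i\le n$.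
   Context: This is the setting of Aasen's algorithm: for a symmetric matrix $A$, Aasen's algorithm computes a permutation matrix $P$ such that $PAP^T=LTL^T$ with $L$ and $T$ as described; the statement is applied with $A$ replaced by $PAP^T$ (which has the same maximal absolute entry). Entries $l_{ij}$ with $j>i$ are $0$ and $l_{ii}=1$. *)

(* Defs.v *)
From HB Require Import structures.
From mathcomp Require Import all_boot all_order all_algebra.
Set Implicit Arguments. Unset Strict Implicit. Unset Printing Implicit Defensive.
Import Order.TTheory GRing.Theory Num.Theory.
Local Open Scope ring_scope.

(* 1-based entry access: ent A i j = a_{ij} for 1 <= i,j <= n (0 outside). *)
Definition ent (R : nzRingType) (n : nat) (A : 'M[R]_n) (i j : nat) : R :=
  match (insub i.-1 : option 'I_n), (insub j.-1 : option 'I_n) with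
  | Some i', Some j' => A i' j'
  | _, _ => 0
  end.

(* Main.v *)
Require Import Defs.
From HB Require Import structures.
From mathcomp Require Import all_boot all_order all_algebra.
From mathcomp Require Import ring lra zify.
Import Order.TTheory GRing.Theory Num.Theory.
Local Open Scope ring_scope.

Lemma entE (R : nzRingType) n (A : 'M[R]_n) (i j : 'I_n) :
  ent A (nat_of_ord i).+1 (nat_of_ord j).+1 = A i j.
Proof. by rewrite /ent /= !valK. Qed.
Arguments entE {R n}.

Lemma sum_supp (R : nzRingType) n (F : 'I_n -> R) (S : seq 'I_n) :
  uniq S -> (forall p, p \notin S -> F p = 0) -> \sum_p F p = \sum_(p <- S) F p.
Proof.
move=> uS HF; rewrite (bigID (mem S)) /= [X in _ + X]big1 ?addr0; last first.
  by move=> p /HF.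
by rewrite big_uniq.
Qed.

Definition cc (R : nzRingType) (k : nat) : R := if (0 < k)%N then 2%:R ^+ (k - 1) else 0.

Lemma geom (R : comNzRingType) j : \sum_(k < j) cc R k = 2%:R ^+ (j - 1) - 1.
Proof.
elim: j => [|j IH]; first by rewrite big_ord0 expr0 subrr.
rewrite big_ord_recr /= IH /cc; case: j {IH} => [|j] /=; first by rewrite addr0.
rewrite !subSS !subn0 exprS; ring.
Qed.

Lemma ord_neq n (p a : 'I_n) : p != a -> nat_of_ord p <> nat_of_ord a.
Proof. by move=> h e; move/eqP: h; apply; apply: val_inj. Qed.

Lemma key (R : realFieldType) n (A L T : 'M[R]_n) :
  A = L *m T *m L^T ->
  (forall i j : 'I_n, (i < j)%N -> L i j = 0) ->
  (forall i : 'I_n, L i i = 1) ->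
  (forall i k : 'I_n, nat_of_ord k = 0%N -> (0 < i)%N -> L i k = 0) ->
  (forall i j, `|A i j| <= 1) ->
  (forall i j, `|L i j| <= 1) ->
  forall i k, `|(L *m T) i k| <= 2%:R ^+ (nat_of_ord k - 1).
Proof.
move=> HA Hup Hd H0 HAb HLb.
set M := L *m T.
have AE i j : A i j = \sum_k M i k * L j k.
  rewrite HA mxE; apply: eq_bigr => k _; by rewrite !mxE.
have ME i j : M i j = A i j - \sum_(k | k != j) M i k * L j k.
  by rewrite AE (bigD1 j) //= Hd mulr1 addrK.
suff: forall j (i k : 'I_n), nat_of_ord k = j -> `|M i k| <= 2%:R ^+ (j - 1).
  by move=> H i k; apply: H.
elim/ltn_ind => j IH i k kj.
rewrite ME; apply: le_trans (ler_normB _ _) _.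
apply: le_trans (lerD (HAb i k) (ler_norm_sum _ _ _)) _.
pose G (p : 'I_n) : R := if (p < j)%N then cc R p else 0.
apply: le_trans (lerD (lexx 1) (_ : _ <= \sum_(p | p != k) G p)) _.
  apply: ler_sum => p pk; rewrite /G normrM.
  case: (ltngtP p j) => hpj.
  - case: (posnP p) => p0.
      by rewrite (H0 k p p0) ?normr0 ?mulr0 /cc ?p0 //; lia.
    rewrite /cc p0; apply: le_trans (_ : `|M i p| * 1 <= _).
      by apply: ler_pM => //; apply: HLb.
    by rewrite mulr1; apply: IH.
  - by rewrite Hup ?normr0 ?mulr0 //; lia.
  - by move: pk; rewrite -val_eqE /= hpj kj eqxx.
have -> : \sum_(p | p != k) G p = \sum_p G p.
  by rewrite [RHS](bigD1 k) //= /G kj ltnn add0r.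
rewrite -big_mkcond /= -(big_ord_widen n (cc R)) ?geom; last by rewrite -kj ltnW.
by rewrite addrC subrK.
Qed.

Theorem lemma1 (R : realFieldType) (n : nat) (A L T : 'M[R]_n) :
  (3 <= n)%N ->
  A^T = A ->
  (forall i j, `|A i j| <= 1) ->
  (exists i j, `|A i j| = 1) ->
  A = L *m T *m L^T ->
  (forall i j : 'I_n, (i < j)%N -> L i j = 0) ->
  (forall i : 'I_n, L i i = 1) ->
  (forall i : nat, (1 <= i <= n)%N -> ent L i 1 = (i == 1%N)%:R) ->
  (forall i j, `|L i j| <= 1) ->
  T^T = T ->
  (forall i j : 'I_n, (i.+1 < j)%N -> T i j = 0) ->
  (`|ent T 1 1| <= 1 /\ `|ent T 2 1| <= 1 /\ `|ent T 2 2| <= 1 /\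
   (forall i : nat, (3 <= i <= n)%N -> `|ent L i 2 * ent T 2 1| <= 1)) /\
  (forall i j : nat, (2 <= j)%N -> (j < i)%N -> (i <= n)%N ->
     `|ent L i j.-1 * ent T j.-1 j + ent L i j * ent T j j
       + ent L i j.+1 * ent T j.+1 j| <= 2%:R ^+ (j - 2)) /\
  `|ent L n n.-1 * ent T n.-1 n + ent T n n| <= 2%:R ^+ (n - 2) /\
  (forall i : nat, (3 <= i <= n)%N ->
     `|ent T i i.-1| <= 2%:R ^+ (i - 2) /\ `|ent T i i| <= 2%:R ^+ (i - 1)).
Proof.
move=> n3 HAs HAb HAex HA Hup Hd Hc HLb HTs HTz.
have H0 : forall i k : 'I_n, nat_of_ord k = 0%N -> (0 < i)%N -> L i k = 0.
  move=> i [[|k] Hk] //= _ i0.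
  have := Hc i.+1; rewrite (entE L i (Ordinal Hk)) eqSS => ->; last first.
    by rewrite ltn_ord.
  by case: (nat_of_ord i) i0.
have KB := @key R n A L T HA Hup Hd H0 HAb HLb.
have Tz : forall p q : 'I_n, (p.+1 < q)%N || (q.+1 < p)%N -> T p q = 0.
  move=> p q /orP [h|h]; first exact: HTz.
  by rewrite -HTs mxE; apply: HTz.
have Tsym p q : T p q = T q p by rewrite -{1}HTs mxE.
set M := L *m T.
have ME i q : M i q = \sum_p L i p * T p q by rewrite mxE.
have KB1 i k : (nat_of_ord k <= 1)%N -> `|M i k| <= 1.
  move=> h; apply: le_trans (KB i k) _.
  by have -> : (nat_of_ord k - 1 = 0)%N by lia.
have Mab : forall a b : 'I_n, nat_of_ord b = (nat_of_ord a).+1 -> M a b = T a b.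
  move=> a b hb; rewrite ME.
  rewrite (@sum_supp _ _ _ [:: a]) //; last first.
    move=> p; rewrite inE => /ord_neq hp; case: (ltngtP p a) => h.
    - by rewrite Tz ?mulr0 //; apply/orP; left; lia.
    - by rewrite Hup ?mul0r.
    - by [].
  by rewrite big_cons big_nil Hd mul1r addr0.
have Mbb : forall a b : 'I_n, nat_of_ord b = (nat_of_ord a).+1 ->
    M b b = L b a * T a b + T b b.
  move=> a b hb; rewrite ME.
  rewrite (@sum_supp _ _ _ [:: a; b]); last first.
    move=> p; rewrite !inE => /norP [/ord_neq hpa /ord_neq hpb].
    case: (ltngtP p b) => h.
    - by rewrite Tz ?mulr0 //; apply/orP; left; lia.
    - by rewrite Hup ?mul0r.
    - by [].
    rewrite /= inE andbT; apply/eqP => e; move: hb; rewrite e; lia.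
  by rewrite !big_cons big_nil Hd mul1r addr0.
have n0 : (0 < n)%N by lia.
have n1 : (1 < n)%N by lia.
pose z0 := Ordinal n0; pose z1 := Ordinal n1.
split; [split; [|split; [|split]]|split; [|split]].
- have -> : ent T 1 1 = T z0 z0 := entE T z0 z0.
  have -> : T z0 z0 = M z0 z0.
    rewrite ME (@sum_supp _ _ _ [:: z0]) //; last first.
      move=> p; rewrite inE -val_eqE /= => hp.
      by rewrite Hup ?mul0r //=; lia.
    by rewrite big_cons big_nil Hd mul1r addr0.
  exact: KB1.
- have -> : ent T 2 1 = T z1 z0 := entE T z1 z0.
  by rewrite Tsym -Mab //; apply: KB1.
- have -> : ent T 2 2 = T z1 z1 := entE T z1 z1.
  have -> : T z1 z1 = M z1 z1.
    rewrite ME (@sum_supp _ _ _ [:: z1]) //; last first.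
      move=> p; rewrite inE => /ord_neq /= hp.
      case: (ltngtP p 1) => h.
      - by rewrite H0 ?mul0r //=; lia.
      - by rewrite Hup ?mul0r.
      - by [].
    by rewrite big_cons big_nil Hd mul1r addr0.
  exact: KB1.
- case=> [|i] // /andP [i3 hi].
  pose I := Ordinal hi.
  have -> : ent L i.+1 2 = L I z1 := entE L I z1.
  have -> : ent T 2 1 = T z1 z0 := entE T z1 z0.
  have <- : M I z0 = L I z1 * T z1 z0.
    rewrite ME (@sum_supp _ _ _ [:: z0; z1]); last first.
      move=> p; rewrite !inE => /norP [/ord_neq /= hpa /ord_neq /= hpb].
      by rewrite Tz ?mulr0 //; apply/orP; right; rewrite /=; lia.
      by [].
    by rewrite !big_cons big_nil addr0 (H0 I z0) ?mul0r ?add0r //=; lia.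
  exact: KB1.
- case=> [|i] [|[|j]] // _ hji hi.
  have hc : (j.+2 < n)%N by lia.
  have hb : (j.+1 < n)%N by lia.
  have ha : (j < n)%N by lia.
  have hI : (i < n)%N by lia.
  pose I := Ordinal hI; pose a := Ordinal ha; pose b := Ordinal hb; pose c := Ordinal hc.
  rewrite /= (entE L I a) (entE T a b) (entE L I b) (entE T b b) (entE L I c) (entE T c b).
  have <- : M I b = L I a * T a b + L I b * T b b + L I c * T c b.
    rewrite ME (@sum_supp _ _ _ [:: a; b; c]); last first.
      move=> p; rewrite !inE => /norP [/ord_neq /= hpa /norP [/ord_neq /= hpb /ord_neq /= hpc]].
      by rewrite Tz ?mulr0 //; apply/orP; rewrite /=; lia.
      rewrite /= !inE !andbT; apply/andP; split.
        by apply/norP; split; apply/eqP => e; move: (congr1 (@nat_of_ord _) e) => /=; lia.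
      by apply/eqP => e; move: (congr1 (@nat_of_ord _) e) => /=; lia.
    by rewrite !big_cons big_nil addr0 addrA.
  have -> : (j.+2 - 2 = nat_of_ord b - 1)%N by rewrite /=; lia.
  exact: KB.
- have ha : (n.-2 < n)%N by lia.
  have hb : (n.-1 < n)%N by lia.
  pose a := Ordinal ha; pose b := Ordinal hb.
  have hab : nat_of_ord b = (nat_of_ord a).+1 by rewrite /=; lia.
  have -> : ent L n n.-1 = L b a.
    rewrite -(entE L b a) /=; f_equal; lia.
  have -> : ent T n.-1 n = T a b.
    rewrite -(entE T a b) /=; f_equal; lia.
  have -> : ent T n n = T b b.
    rewrite -(entE T b b) /=; f_equal; lia.
  rewrite -(Mbb a b hab).
  have -> : (n - 2 = nat_of_ord b - 1)%N by rewrite /=; lia.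
  exact: KB.
- move=> i /andP [i3 hi].
  have ha : (i - 2 < n)%N by lia.
  have hb : (i - 1 < n)%N by lia.
  pose a := Ordinal ha; pose b := Ordinal hb.
  have hab : nat_of_ord b = (nat_of_ord a).+1 by rewrite /=; lia.
  have -> : ent T i i.-1 = T b a.
    rewrite -(entE T b a) /=; f_equal; lia.
  have -> : ent T i i = T b b.
    rewrite -(entE T b b) /=; f_equal; lia.
  have h1 : `|T a b| <= 2%:R ^+ (i - 2).
    rewrite -Mab //; have -> : (i - 2 = nat_of_ord b - 1)%N by rewrite /=; lia.
    exact: KB.
  split; first by rewrite Tsym.
  have h2 : `|M b b| <= 2%:R ^+ (i - 2).
    have -> : (i - 2 = nat_of_ord b - 1)%N by rewrite /=; lia.
    exact: KB.
  have h3 : `|L b a * T a b| <= 2%:R ^+ (i - 2).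
    rewrite normrM -[X in _ <= X]mul1r; apply: ler_pM => //.
  have e : T b b = M b b - L b a * T a b by rewrite (Mbb a b hab) addrC addKr.
  have -> : (i - 1 = (i - 2).+1)%N by lia.
  rewrite exprS e; apply: le_trans (ler_normB _ _) _.
  set x := 2%:R ^+ (i - 2) in h2 h3 *. lra.
Qed.
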